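(* Let $p>2$ be a prime, $D$ an integer with $D\not\equiv0\pmod p$, and $\xi\in(0,1)$. Then for any distinct $g,g'\in\mathbb{Z}_p$ there are at least $\xi\cdot(p-1)$ values $c\in\mathbb{Z}_p$ with $c\not\equiv 0\pmod p$ such that \[\mathrm{dist}_{p,D}(c g\bmod p,\ c g'\bmod p) > (1-\xi)\cdot\frac{p-1}{2}.\]
   Context: For $g_0,g_1\in\mathbb{Z}_p$, $\mathrm{dist}_{p,D}(g_0,g_1)=\min\{(g_1-g_0)D^{-1}\bmod p,\ (g_0-g_1)D^{-1}\bmod p\}$, where each term is viewed as an integer in $\{0,\dots,p-1\}$ and $D^{-1}$ is the inverse of $D$ modulo $p$. *)

(* Defs.v *)
From mathcomp Require Import all_boot all_order all_algebra.
From mathcomp Require Import reals.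
Set Implicit Arguments. Unset Strict Implicit. Unset Printing Implicit Defensive.
Import Order.TTheory GRing.Theory Num.Theory.
Local Open Scope ring_scope.

Definition distpD (p : nat) (D : int) (g0 g1 : 'F_p) : nat :=
  minn (val ((g1 - g0) / (D%:~R : 'F_p))) (val ((g0 - g1) / (D%:~R : 'F_p))).

(* Main.v *)
Require Import Defs.
From mathcomp Require Import all_boot all_order all_algebra.
From mathcomp Require Import reals.
From mathcomp Require Import ring lra zify.
Import Order.TTheory GRing.Theory Num.Theory.
Local Open Scope ring_scope.

Section Aux.
Variable p : nat.
Hypothesis hp : prime p.

Lemma Fp_val_lt (x : 'F_p) : (nat_of_ord x < p)%N.
Proof. have h := ltn_ord x; have e := Fp_cast hp; rewrite [X in (_ < X)%N]e in h; exact h. Qed.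

Lemma Fp_valn n : \val (n%:R : 'F_p) = (n %% p)%N.
Proof. exact: val_Fp_nat. Qed.

Lemma Fp_oppv (x : 'F_p) : x != 0 -> val (- x) = (p - val x)%N.
Proof.
move=> x0.
have -> : - x = (p - val x)%N%:R.
  apply/eqP; rewrite eq_sym -subr_eq0 opprK.
  rewrite -[X in _ + X](natr_Zp x) -natrD.
  have hx := Fp_val_lt x.
  rewrite subnK; last by apply: ltnW.
  by rewrite pchar_Fp_0.
have hx := Fp_val_lt x.
have := val_Fp_nat hp (p - val x); rewrite /= => ->; rewrite modn_small //.
have : nat_of_ord x <> 0%N by move=> h; move/eqP: x0; apply; apply: val_inj.
lia.
Qed.

Lemma Fp_int_neq0 (D : int) : ~~ (p %| `|D|)%N -> (D%:~R : 'F_p) != 0.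
Proof.
move=> hD; case: D hD => n hD.
  rewrite /= in hD; change ((n%:R : 'F_p) != 0); by rewrite -(dvdn_pcharf (pchar_Fp hp)).
rewrite NegzE in hD *; rewrite mulrNz oppr_eq0.
change ((n.+1%:R : 'F_p) != 0); by rewrite -(dvdn_pcharf (pchar_Fp hp)).
Qed.
End Aux.

Lemma natL1 (p t n i : nat) : (2 < p)%N -> n = (p.-1 - t.*2)%N -> (i < n)%N -> (i + t.+1 < p - t)%N.
Proof. move=> *; lia. Qed.
Lemma natL2 (p t x : nat) : (t < x)%N -> (x < p - t)%N -> (t < p - x)%N.
Proof. move=> *; lia. Qed.
Lemma natL3 (t n : nat) : (t < n)%N -> n = n.-1.+1 /\ (t <= n.-1)%N.
Proof. move=> *; lia. Qed.
Lemma realL1 (R : realFieldType) (xi P : R) : 0 < xi -> 0 < P -> (1 - xi) * P < P.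
Proof. move=> *; nra. Qed.
Lemma realL2 (R : realFieldType) (xi P u : R) : u <= (1 - xi) * P -> xi * P <= P - u.
Proof. move=> *; lra. Qed.

Theorem lemma4p1 (R : realType) (p : nat) (D : int) (xi : R)
  (hp : prime p) (hp2 : (2 < p)%N) (hD : ~~ (p %| `|D|)%N)
  (hxi0 : 0 < xi) (hxi1 : xi < 1) (g g' : 'F_p) (hgg : g != g') :
  xi * (p.-1)%:R <=
  (#|[set c : 'F_p | (c != 0) &&
       ((1 - xi) * (p.-1)%:R / 2%:R < (distpD D (c * g) (c * g'))%:R)]|)%:R.
Proof.
set T := (1 - xi) * (p.-1)%:R / 2%:R.
set S := [set c : 'F_p | _].
set e : 'F_p := (g' - g) / (D%:~R : 'F_p).
have hDn := @Fp_int_neq0 p hp D hD.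
have e0 : e != 0 by rewrite mulf_neq0 ?invr_eq0 // subr_eq0 eq_sym.
have hdist c : distpD D (c * g) (c * g') = minn (val (c * e)) (val (- (c * e))).
  rewrite /distpD /e; congr minn; congr val; ring.
have P1 : (1 < p.-1)%N by lia.
have Pr : (0 : R) < (p.-1)%:R by rewrite ltr0n; lia.
have T0 : 0 <= T by rewrite /T; apply: divr_ge0 => //; apply: mulr_ge0; lra.
set t := Num.truncn T.
have htT : t%:R <= T by rewrite /t truncn_le.
have h2t : (t.*2 < p.-1)%N.
  rewrite -(ltr_nat R) -muln2 natrM.
  have hT2 : T * 2 = (1 - xi) * (p.-1)%:R by rewrite /T mulrAC -mulrA divff ?mulr1 ?pnatr_eq0.
  have h : T * 2 < (p.-1)%:R by rewrite hT2 realL1.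
  apply: le_lt_trans h; rewrite ler_pM2r //.
have key n : (t < n)%N -> T < n%:R.
  move=> htn; have [-> h] := @natL3 t n htn.
  by rewrite -truncn_le_nat -/t.
clearbody t.
set A := [set x : 'F_p | (t < val x)%N && (val x < p - t)%N].
have SA : [set x / e | x in A] \subset S.
  apply/subsetP => y /imsetP [x hx ->]; move: hx; rewrite inE => /andP[h1 h2].
  have x0 : x != 0 by apply/eqP => x0; rewrite x0 in h1.
  rewrite inE mulf_neq0 ?invr_eq0 //= hdist mulrVK ?unitfE //.
  rewrite (@Fp_oppv p hp x x0); apply: key; by rewrite leq_min h1 (@natL2 p t _ h1 h2).
have cA : #|A| = #|[set x / e | x in A]|.
  by rewrite card_imset //; apply: (can_inj (divrK _)); rewrite unitfE.
have [n hn] : {n | n = (p.-1 - t.*2)%N} by exists (p.-1 - t.*2)%N.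
have An : (n <= #|A|)%N.
  have fi : injective (fun i : 'I_n => ((i + t.+1)%N%:R : 'F_p)).
    move=> i j /(congr1 val); have hi := ltn_ord i; have hj := ltn_ord j.
    have := @natL1 p t n i hp2 hn hi; have := @natL1 p t n j hp2 hn hj => hj' hi'.
    rewrite !(@Fp_valn p hp) !modn_small.
    - by move=> h; apply: val_inj => /=; apply/eqP; rewrite -(eqn_add2r t.+1) h.
    - exact: leq_trans hj' (leq_subr _ _).
    - exact: leq_trans hi' (leq_subr _ _).
  rewrite -(card_ord n) -(card_imset _ fi).
  apply: subset_leq_card; apply/subsetP => y /imsetP [i _ ->].
  have hi' := @natL1 p t n i hp2 hn (ltn_ord i).
  rewrite inE (@Fp_valn p hp) modn_small; last exact: leq_trans hi' (leq_subr _ _).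
  by rewrite hi' andbT ltn_addl.
have Sn : (n <= #|S|)%N by rewrite (leq_trans An) // cA subset_leq_card.
apply: (le_trans _ (_ : n%:R <= _)); last by rewrite ler_nat.
rewrite hn natrB; last exact: ltnW.
rewrite -muln2 natrM; apply: realL2.
have hT2 : T * 2 = (1 - xi) * (p.-1)%:R by rewrite /T mulrAC -mulrA divff ?mulr1 ?pnatr_eq0.
by rewrite -hT2 ler_pM2r.
Qed.
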